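(* Let $N>1$ and suppose $\tau$ is a linear-fractional self-map of $B_N$ such that $\tau(\lambda e_1)=\lambda e_1$ for every $\lambda\in\mathbb C$ with $|\lambda|=1$, where $e_1=(1,0,\dots,0)$. Then there is an $(N-1)\times(N-1)$ matrix $A'$ such that $\tau(z_1,z_2,\dots,z_N)=(z_1,A'z')$ for all $z\in B_N$, where $z'=(z_2,\dots,z_N)$.
   Context: $B_N$ is the open unit ball of $\mathbb C^N$ with inner product $\langle z,w\rangle=\sum z_j\overline{w_j}$. A linear-fractional self-map of $B_N$ is a map $\tau(z)=\frac{Az+B}{\langle z,C\rangle+d}$ ($A$ an $N\times N$ matrix, $B,C\in\mathbb C^N$, $d\in\mathbb C$) analytic on $B_N$ with $\tau(B_N)\subseteq B_N$; it is analytic on a neighborhood of $\overline{B_N}$. The hypothesis says $\tau$ restricted to the complex line $[e_1]=\{\lambda e_1:\lambda\in\mathbb C\}$ is the identity on $[e_1]\cap\partial B_N$. *)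

(* Defs.v *)
From HB Require Import structures.
From mathcomp Require Import all_boot all_order all_algebra.
From mathcomp Require Import complex.
Set Implicit Arguments. Unset Strict Implicit. Unset Printing Implicit Defensive.
Import Order.TTheory GRing.Theory Num.Theory.
Local Open Scope ring_scope.

(* Complex numbers: C := R[i] over an arbitrary real closed field R
   (for R = the reals this is the usual field of complex numbers).
   Points of C^N are column vectors 'cV[R[i]]_N. *)

Definition cinner (R : rcfType) (N : nat) (z w : 'cV[R[i]]_N) : R[i] :=
  \sum_(j < N) z j 0 * (w j 0)^*.

Definition in_ball (R : rcfType) (N : nat) (z : 'cV[R[i]]_N) : Prop :=
  \sum_(j < N) `|z j 0| ^+ 2 < 1.

Definition lfmap (R : rcfType) (N : nat) (A : 'M[R[i]]_N) (B C : 'cV[R[i]]_N)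
  (d : R[i]) (z : 'cV[R[i]]_N) : 'cV[R[i]]_N :=
  (cinner z C + d)^-1 *: (A *m z + B).

(* tau is a linear-fractional self-map of B_N: analytic on B_N (the
   denominator does not vanish on B_N) and tau(B_N) is contained in B_N. *)
Definition lf_selfmap (R : rcfType) (N : nat) (A : 'M[R[i]]_N) (B C : 'cV[R[i]]_N)
  (d : R[i]) : Prop :=
  forall z : 'cV[R[i]]_N, in_ball z ->
    cinner z C + d != 0 /\ in_ball (lfmap A B C d z).

Definition e1 (R : rcfType) (n : nat) : 'cV[R[i]]_n.+1 := delta_mx 0 0.

(* Main.v *)
Require Import Defs.
From HB Require Import structures.
From mathcomp Require Import all_boot all_order all_algebra.
From mathcomp Require Import complex.
From mathcomp Require Import ring lra.
Import Order.TTheory GRing.Theory Num.Theory.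
Local Open Scope ring_scope.

Lemma real_key (R : rcfType) (a1 a2 g1 g2 : R) :
  (forall x1 x2 y1 y2 : R, x1^+2 + x2^+2 + (y1^+2 + y2^+2) < 1 ->
    (x1 + (a1*y1 - a2*y2))^+2 + (x2 + (a1*y2 + a2*y1))^+2 <
    (1 + (g1*y1 - g2*y2))^+2 + (0 + (g1*y2 + g2*y1))^+2) ->
  [/\ a1 = 0, a2 = 0, g1 = 0 & g2 = 0].
Proof.
move=> H.
set p := a1^+2 + a2^+2. set q := g1^+2 + g2^+2.
have p0 : p = 0.
  apply/eqP; rewrite eq_le; apply/andP; split; last by rewrite /p; nra.
  rewrite leNgt; apply/negP => pp.
  have q0 : 0 <= q by rewrite /q; nra.
  set s := 4 / (p + 8 + 4* q).
  have spos : 0 < s by rewrite /s divr_gt0 //; lra.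
  have sE : s * (p + 8 + 4* q) = 4 by rewrite /s mulfVK //; lra.
  set t := 1 - s * p / 2.
  have H1 := H t 0 (s*a1) (-(s*a2)).
  have H2 := H (-t) 0 (-(s*a1)) (s*a2).
  have cond : t^+2 + 0^+2 + ((s*a1)^+2 + (-(s*a2))^+2) < 1.
    have -> : t^+2 + 0^+2 + ((s*a1)^+2 + (-(s*a2))^+2) = 1 - s* p*(1 - s*(p+4)/4).
      by rewrite /t /p; field.
    have : 0 < s* p*(1 - s*(p+4)/4).
      apply: mulr_gt0; first exact: mulr_gt0.
      have : s*(p+4) = 4 - s*4*(q+1) by nra.
      move=> ->; nra.
    lra.
  have cond2 : (-t)^+2 + 0^+2 + ((-(s*a1))^+2 + (s*a2)^+2) < 1.
    by move: cond; rewrite !sqrrN.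
  move: (H1 cond) (H2 cond2).
  set u := g1*a1 + g2*a2. set v := g2*a1 - g1*a2.
  have E1 : (t + (a1*(s*a1) - a2*(-(s*a2))))^+2 + (0 + (a1*(-(s*a2)) + a2*(s*a1)))^+2 = (t + s* p)^+2 by rewrite /p; ring.
  have E2 : (1 + (g1*(s*a1) - g2*(-(s*a2))))^+2 + (0 + (g1*(-(s*a2)) + g2*(s*a1)))^+2 = (1 + s*u)^+2 + (s*v)^+2 by rewrite /u /v; ring.
  have E3 : (-t + (a1*(-(s*a1)) - a2*(s*a2)))^+2 + (0 + (a1*(s*a2) + a2*(-(s*a1))))^+2 = (t + s* p)^+2 by rewrite /p; ring.
  have E4 : (1 + (g1*(-(s*a1)) - g2*(s*a2)))^+2 + (0 + (g1*(s*a2) + g2*(-(s*a1))))^+2 = (1 - s*u)^+2 + (s*v)^+2 by rewrite /u /v; ring.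
  rewrite E1 E2 E3 E4 => h1 h2.
  have uv : u^+2 + v^+2 = q * p by rewrite /u /v /q /p; ring.
  have sq : s * q < 1.
    have : s * q * 4 < 4 by rewrite -[X in _ < X]sE; nra.
    lra.
  have : (t + s* p)^+2 - 1 - s^+2 * (q* p) >= s* p*(1 - s* q).
    have -> : (t + s* p)^+2 - 1 - s^+2 * (q* p) = s* p*(1 - s* q) + (s* p)^+2/4 by rewrite /t; field.
    have : 0 <= (s* p)^+2/4 by apply: divr_ge0; [exact: sqr_ge0|].
    lra.
  have : 0 < s* p*(1 - s* q) by apply: mulr_gt0; [exact: mulr_gt0| lra].
  nra.
have a10 : a1 = 0 by move: p0; rewrite /p; nra.
have a20 : a2 = 0 by move: p0; rewrite /p; nra.
subst a1 a2.
have q0 : q = 0.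
  apply/eqP; rewrite eq_le; apply/andP; split; last by rewrite /q; nra.
  rewrite leNgt; apply/negP => qp.
  set s := 1 / (q + 1).
  have spos : 0 < s by rewrite /s divr_gt0 //; lra.
  have sE : s * (q + 1) = 1 by rewrite /s mulfVK //; lra.
  set t := 1 - s * q.
  have cond : t^+2 + 0^+2 + ((-(s*g1))^+2 + (s*g2)^+2) < 1.
    have -> : t^+2 + 0^+2 + ((-(s*g1))^+2 + (s*g2)^+2) = 1 - 2*s* q + s* q*(s*(q+1)) by rewrite /t /q; ring.
    rewrite sE; nra.
  move: (H t 0 (-(s*g1)) (s*g2) cond).
  have -> : (1 + (g1 * - (s * g1) - g2 * (s * g2))) = t by rewrite /t /q; ring.
  have -> : (0 + (g1 * (s * g2) + g2 * - (s * g1))) = 0 by ring.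
  have -> : (t + (0 * - (s * g1) - 0 * (s * g2))) = t by ring.
  have -> : (0 + (0 * (s * g2) + 0 * - (s * g1))) = 0 by ring.
  by rewrite ltxx.
have g10 : g1 = 0 by move: q0; rewrite /q; nra.
have g20 : g2 = 0 by move: q0; rewrite /q; nra.
by [].
Qed.

Section CK.
Local Open Scope complex_scope.

Lemma cplx_key (R : rcfType) (a g : R[i]) :
  (forall x y : R[i], `|x|^+2 + `|y|^+2 < 1 -> `|x + a*y|^+2 < `|1 + g*y|^+2) ->
  a = 0 /\ g = 0.
Proof.
case: a => a1 a2; case: g => g1 g2 H.
have H' : forall x1 x2 y1 y2 : R, x1^+2 + x2^+2 + (y1^+2 + y2^+2) < 1 ->
    (x1 + (a1*y1 - a2*y2))^+2 + (x2 + (a1*y2 + a2*y1))^+2 <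
    (1 + (g1*y1 - g2*y2))^+2 + (0 + (g1*y2 + g2*y1))^+2.
  move=> x1 x2 y1 y2 h.
  have := H (x1 +i* x2)%C (y1 +i* y2)%C.
  rewrite -!add_Re2_Im2 -rmorphD !ltcE /= eqxx /=.
  by apply.
case: (@real_key R _ _ _ _ H') => a1E a2E g1E g2E; subst; split; reflexivity.
Qed.

End CK.

Lemma sum2 (R : rcfType) (n : nat) (j : 'I_n.+1) (F : 'I_n.+1 -> R[i]) :
  j != 0 -> (forall i, i != 0 -> i != j -> F i = 0) -> \sum_i F i = F 0 + F j.
Proof.
move=> j0 HF; rewrite (bigD1 0) //= (bigD1 j) /=; last by rewrite j0.
rewrite big1 ?addr0 // => i /andP[i0 ij]; exact: HF.
Qed.

Lemma twice0 (R : rcfType) (x : R[i]) : x + x = 0 -> x = 0.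
Proof. by move=> h; apply/eqP; rewrite -[x + x]mulr2n in h; move: (h); move/eqP; rewrite mulrn_eq0. Qed.

Arguments twice0 {R x}.
Arguments cplx_key {R a g}.
Arguments sum2 {R n} j F.

Theorem proposition1 (R : rcfType) (n : nat) (hn : (0 < n)%N)
  (A : 'M[R[i]]_n.+1) (B C : 'cV[R[i]]_n.+1) (d : R[i]) :
  lf_selfmap A B C d ->
  (forall lam : R[i], `|lam| = 1 ->
     cinner (lam *: e1 R n) C + d != 0 /\
     lfmap A B C d (lam *: e1 R n) = lam *: e1 R n) ->
  exists A' : 'M[R[i]]_n,
    forall z : 'cV[R[i]]_n.+1, in_ball z ->
      lfmap A B C d z 0 0 = z 0 0 /\
      forall k : 'I_n,
        lfmap A B C d z (lift 0 k) 0 = \sum_(j < n) A' k j * z (lift 0 j) 0.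
Proof.
move=> Hself Hfix.
have e1E : forall i, e1 R n i 0 = (i == 0)%:R.
  by move=> i; rewrite /e1 mxE eqxx andbT.
have fixE : forall lam, `|lam| = 1 -> forall i,
    lam * A i 0 + B i 0 = (lam * (C 0 0)^* + d) * (lam * (i == 0)%:R).
  move=> lam hl i; case: (Hfix lam hl); rewrite /lfmap => hD hE.
  move: hE => /(congr1 (fun M => (cinner (lam *: e1 R n) C + d) *: M)) /=.
  rewrite !scalerA mulfV // scale1r => /(congr1 (fun M : 'cV[R[i]]_n.+1 => M i 0)) /=.
  rewrite !mxE (bigD1 0) //= big1 ?addr0; last first.
    by move=> j j0; rewrite !mxE ?e1E ?andbT (negbTE j0) !mulr0.
  rewrite !mxE ?e1E ?andbT eqxx mulr1 => h; rewrite mulrC h.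
  have -> : cinner (lam *: e1 R n) C = lam * (C 0 0)^*.
    rewrite /cinner (bigD1 0) //= big1 ?addr0.
      by rewrite !mxE ?e1E ?andbT eqxx mulr1.
    by move=> j j0; rewrite !mxE ?e1E ?andbT (negbTE j0) mulr0 mul0r.
  by rewrite mulrA.
have n1 : `|1 : R[i]| = 1 by rewrite normr1.
have nN1 : `|-1 : R[i]| = 1 by rewrite normrN1.
have ni : `|'i%C : R[i]| = 1.
  by rewrite normc_def /= expr0n /= add0r expr1n sqrtr1.
set c := (C 0 0)^*.
have cinE : forall lam, cinner (lam *: e1 R n) C = lam * c.
  move=> lam; rewrite /cinner (bigD1 0) //= big1 ?addr0.
    by rewrite !mxE ?e1E ?andbT eqxx mulr1.
  by move=> j j0; rewrite !mxE ?e1E ?andbT (negbTE j0) mulr0 mul0r.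
have AcBc : forall k, A (lift 0 k) 0 = 0 /\ B (lift 0 k) 0 = 0.
  move=> k; have h1 := fixE 1 n1 (lift 0 k); have h2 := fixE (-1) nN1 (lift 0 k).
  rewrite [lift _ _ == _]eq_sym (negbTE (neq_lift _ _)) !mulr0 in h1 h2.
  have e : A (lift 0 k) 0 + A (lift 0 k) 0 =
     (1 * A (lift 0 k) 0 + B (lift 0 k) 0) - (-1 * A (lift 0 k) 0 + B (lift 0 k) 0) by ring.
  rewrite h1 h2 subr0 in e; have hA := twice0 e.
  by rewrite hA mulr0 add0r in h1.
have h1 := fixE 1 n1 0; have h2 := fixE (-1) nN1 0; have h3 := fixE _ ni 0.
have oneR : (true%:R : R[i]) = 1 by [].
rewrite eqxx -/c oneR !mulr1 in h1 h2 h3.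
have hB0 : B 0 0 = c.
  apply/eqP; rewrite -subr_eq0; apply/eqP/twice0.
  have -> : B 0 0 - c + (B 0 0 - c) = (1 * A 0 0 + B 0 0) + (-1 * A 0 0 + B 0 0) - ((1 * c + d) + (-1 * c + d) * -1) by ring.
  by rewrite h1 h2 subrr.
have hA0 : A 0 0 = d.
  apply/eqP; rewrite -subr_eq0; apply/eqP/twice0.
  have -> : A 0 0 - d + (A 0 0 - d) = (1 * A 0 0 + B 0 0) - (-1 * A 0 0 + B 0 0) - ((1 * c + d) - (-1 * c + d) * -1) by ring.
  by rewrite h1 h2 subrr.
have hc : c = 0.
  apply/twice0.
  have -> : c + c = ('i%C * A 0 0 + B 0 0) - ('i%C * c + d) * 'i%C + ('i%C ^+ 2 + 1) * c + 'i%C * (d - A 0 0) + (c - B 0 0) by ring.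
  by rewrite h3 subrr sqr_i addNr mul0r hA0 hB0 !subrr mulr0 !addr0.
have dn0 : d != 0.
  by case: (Hfix 1 n1); rewrite cinE hc mulr0 add0r.
have key : forall k : 'I_n, A 0 (lift 0 k) = 0 /\ C (lift 0 k) 0 = 0.
  move=> k; set j : 'I_n.+1 := lift 0 k.
  have j0 : j != 0 by rewrite eq_sym neq_lift.
  pose z (x y : R[i]) : 'cV[R[i]]_n.+1 :=
    \col_i (if i == 0 then x else if i == j then y else 0).
  have zN : forall x y i, i != 0 -> i != j -> z x y i 0 = 0.
    by move=> x y i i0 ij; rewrite mxE (negbTE i0) (negbTE ij).
  have z0 : forall x y, z x y 0 0 = x by move=> x y; rewrite mxE eqxx.
  have zj : forall x y, z x y j 0 = y by move=> x y; rewrite mxE (negbTE j0) eqxx.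
  have H2 : forall x y : R[i], `|x|^+2 + `|y|^+2 < 1 ->
      `|x + (A 0 j / d) * y|^+2 < `|1 + ((C j 0)^* / d) * y|^+2.
    move=> x y hxy.
    have hz : in_ball (z x y).
      rewrite /in_ball (sum2 j) ?z0 ?zj //.
      by move=> i i0 ij; rewrite zN // normr0 expr0n.
    case: (Hself _ hz) => hD hw.
    have Dz : cinner (z x y) C + d = y * (C j 0)^* + d.
      rewrite /cinner (sum2 j) // ?z0 ?zj; last by move=> i i0 ij; rewrite zN // mul0r.
      by rewrite -/c hc mulr0 add0r.
    rewrite Dz in hD.
    have Dn : (1 + (C j 0)^* / d * y) != 0.
      have : y * (C j 0)^* + d = d * (1 + (C j 0)^* / d * y) by field.
      by move=> e; rewrite e mulf_eq0 negb_or in hD; case/andP: hD.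
    have w0 : lfmap A B C d (z x y) 0 0 = (x + (A 0 j / d) * y) / (1 + ((C j 0)^* / d) * y).
      rewrite /lfmap Dz mxE [(A *m _ + B) 0 0]mxE [(A *m _) 0 0]mxE (sum2 j) //; last first.
        by move=> i i0 ij; rewrite zN // mulr0.
      rewrite z0 zj hA0 hB0 -/c hc addr0.
      field; rewrite dn0 /= addrC mulrC; exact: hD.
    have hw0 : `|lfmap A B C d (z x y) 0 0|^+2 < 1.
      move: hw; rewrite /in_ball big_ord_recl => hw; apply: le_lt_trans hw.
      rewrite lerDl; apply: sumr_ge0 => i _; exact: exprn_ge0.
    move: hw0; rewrite w0 normf_div expr_div_n ltr_pdivrMr ?mul1r //.
    by rewrite exprn_gt0 // normr_gt0.
  case: (cplx_key H2) => /eqP ha /eqP hg; split.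
    by apply/eqP; move: ha; rewrite mulf_eq0 invr_eq0 (negbTE dn0) orbF.
  by apply/eqP; move: hg; rewrite mulf_eq0 invr_eq0 (negbTE dn0) orbF conjC_eq0.
exists (\matrix_(k, j) (d^-1 * A (lift 0 k) (lift 0 j))).
move=> z hz; case: (Hself z hz) => hD _.
have Dz : cinner z C + d = d.
  rewrite /cinner big_ord_recl big1 ?addr0.
    by rewrite -/c hc mulr0 add0r.
  by move=> k _; case: (key k) => _ ->; rewrite conjC0 mulr0.
split.
  rewrite /lfmap Dz mxE [(A *m z + B) 0 0]mxE [(A *m z) 0 0]mxE big_ord_recl big1.
    by rewrite hA0 hB0 -/c hc !addr0 mulrA mulVf // mul1r.
  by move=> k _; case: (key k) => -> _; rewrite mul0r.
move=> k; case: (AcBc k) => hAk hBk.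
rewrite /lfmap Dz mxE [(A *m z + B) _ 0]mxE [(A *m z) _ 0]mxE big_ord_recl hAk hBk.
rewrite mul0r add0r addr0 mulr_sumr; apply: eq_bigr => j _.
by rewrite mxE mulrA.
Qed.
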